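(* Let $\mathcal{X}$ be a set, $p\ge2$, $\Theta$ a parameter set, and for each $\theta\in\Theta$ let $s^\theta:\mathcal{X}\to\mathbb{R}^p$ be a score map with predictor $h_\theta$ and pairwise reduction $g_\theta$. Let $\mathcal{H}_\Theta=\{h_\theta:\theta\in\Theta\}$ and $\mathcal{G}_\Theta=\{g_\theta:\theta\in\Theta\}$. If a set $S=\{x^{(1)},\dots,x^{(n)}\}\subseteq\mathcal{X}$ of $n$ distinct points is Natarajan-shattered by $\mathcal{H}_\Theta$, then \[ 2^n\ \le\ \Pi_{\mathcal{G}_\Theta}\big(n\,p(p-1)/2\big). \]
   Context: Labels are $[p]=\{1,\dots,p\}$. The predictor is $h_\theta(x)=\ell$ if $s^\theta_\ell(x)>s^\theta_k(x)$ for all $k\ne\ell$, and $h_\theta(x)=\bot$ otherwise ($\bot\notin[p]$). The pairwise reduction is defined on $\mathcal{Z}_{\mathrm{pair}}=\mathcal{X}\times\{(i,j)\in[p]^2:i<j\}$ by $g_\theta(x,i,j)=+1$ if $s^\theta_i(x)\ge s^\theta_j(x)$ and $-1$ otherwise. A finite $S\subseteq\mathcal{X}$ is Natarajan-shattered by a class $\mathcal{H}$ of functions $\mathcal{X}\to[p]\cup\{\bot\}$ if there exist $f_1,f_2:S\to[p]$ with $f_1(x)\ne f_2(x)$ for all $x\in S$ such that for every $b\in\{1,2\}^S$ some $h\in\mathcal{H}$ satisfies $h(x)=f_{b(x)}(x)$ for all $x\in S$. For a class $\mathcal{B}\subseteq\{-1,+1\}^{\mathcal{Z}}$, the growth function is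 $\Pi_{\mathcal{B}}(N)=\max\{|\{b|_T:b\in\mathcal{B}\}|:\ T\subseteq\mathcal{Z},|T|=N\}$. *)

(* Defs.v *)
From HB Require Import structures.
From mathcomp Require Import all_boot all_order all_algebra.
From mathcomp Require Import boolp reals.
Set Implicit Arguments. Unset Strict Implicit. Unset Printing Implicit Defensive.
Import Order.TTheory GRing.Theory Num.Theory.
Local Open Scope ring_scope.

(* Labels [p] = 'I_p ; the abstention symbol \bot is None. *)

Definition predictor (R : realType) (X : Type) (p : nat)
    (s : X -> 'I_p -> R) (x : X) : option 'I_p :=
  [pick l : 'I_p | [forall k : 'I_p, (k != l) ==> (s x k < s x l)]].

Definition pairs (p : nat) : Type := {ij : 'I_p * 'I_p | (ij.1 < ij.2)%N}.

Definition Zpair (X : Type) (p : nat) : Type := (X * pairs p)%type.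

(* pairwise reduction g_theta(x,i,j) = +1 iff s_i(x) >= s_j(x);
   +1 is encoded as true, -1 as false. *)
Definition pairwise_red (R : realType) (X : Type) (p : nat)
    (s : X -> 'I_p -> R) (z : Zpair X p) : bool :=
  s z.1 (sval z.2).1 >= s z.1 (sval z.2).2.

(* Functions f1,f2 : S -> [p]
   are represented through the (bijective) indexing 'I_n -> S. *)
Definition Natarajan_shattered (X : Type) (p n : nat)
    (H : (X -> option 'I_p) -> Prop) (x : 'I_n -> X) : Prop :=
  exists f1 f2 : 'I_n -> 'I_p,
    (forall k, f1 k != f2 k) /\
    forall b : 'I_n -> bool, exists h, H h /\
      forall k, h (x k) = Some (if b k then f1 k else f2 k).

Definition npatterns (Z : Type) (B : (Z -> bool) -> Prop) (N : nat)
    (T : 'I_N -> Z) : nat :=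
  #|[set f : {ffun 'I_N -> bool} |
      `[< exists b, B b /\ forall i, f i = b (T i) >] ]|.

(* Growth function: max over subsets T of Z with |T| = N of npatterns.
   (The number of patterns is always <= 2^N, so the max ranges over k <= 2^N.) *)
Definition growth (Z : Type) (B : (Z -> bool) -> Prop) (N : nat) : nat :=
  (\max_(k < (2 ^ N).+1 |
      `[< exists T : 'I_N -> Z, injective T /\ npatterns B T = k >]) k)%N.

(* Main.v *)
Require Import Defs.
From mathcomp Require Import all_boot all_order all_algebra.
From mathcomp Require Import boolp reals.
From mathcomp Require Import zify.
Import Order.TTheory GRing.Theory Num.Theory.

Lemma cnt (p : nat) : #|[pred ij : 'I_p * 'I_p | (ij.1 < ij.2)%N]| = p * (p-1) %/ 2.
Proof.
have swapK : involutive (fun ij : 'I_p * 'I_p => (ij.2, ij.1)) by case.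
set A := [pred ij : 'I_p * 'I_p | (ij.1 < ij.2)%N].
set B := [pred ij : 'I_p * 'I_p | (ij.2 < ij.1)%N].
set C := [pred ij : 'I_p * 'I_p | ij.1 == ij.2].
have E1 : #|A| = #|B|.
  rewrite -(card_image (inv_inj swapK)); apply: eq_card => -[i j]; rewrite inE /=.
  apply/imageP/idP => [[[a b] /=]|H]; last by exists (j, i).
  by rewrite inE /= => H [-> ->].
have E2 : #|C| = p.
  rewrite -[RHS](card_ord p) -(card_image (f := fun i : 'I_p => (i, i))); last by move=> a b [].
  apply: eq_card => -[i j]; rewrite inE /=; apply/eqP/imageP => [->|[a _ [-> ->]]] //; by exists j.
have E3 : p * p = #|A| + #|B| + #|C|.
  rewrite -[in LHS](card_ord p) -card_prod -(cardC A) -(cardID B [predC A]) -addnA.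
  congr (_ + (_ + _)); apply: eq_card => -[i j]; rewrite !inE /=; case: ltngtP => //.
  1,2: by move=> H; apply/esym/eqP=> E; move: H; rewrite E ltnn.
  by move=> /ord_inj ->; rewrite eqxx.
have -> : p * (p - 1) = #|A| * 2 by rewrite mulnBr muln1; lia.
by rewrite mulnK.
Qed.

Lemma pred_some (R : realType) (X : Type) (p : nat) (s : X -> 'I_p -> R) y l :
  predictor s y = Some l -> forall m, m != l -> (s y m < s y l)%R.
Proof.
rewrite /predictor; case: pickP => // l' /forallP H [<-] m Hm.
exact: (implyP (H m) Hm).
Qed.

Arguments pred_some {R X p s y l}.

Lemma sep_pair (R : realType) (X : Type) (p : nat) (s1 s2 : X -> 'I_p -> R) y a1 a2 :
  a1 != a2 -> predictor s1 y = Some a1 -> predictor s2 y = Some a2 ->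
  exists ij : {ij : 'I_p * 'I_p | (ij.1 < ij.2)%N},
    pairwise_red s1 (y, ij) != pairwise_red s2 (y, ij).
Proof.
move=> na P1 P2.
have H2' : (s2 y a1 < s2 y a2)%R by apply: (pred_some P2).
have H1'' : (s1 y a2 < s1 y a1)%R by apply: (pred_some P1); rewrite eq_sym.
case: (ltngtP a1 a2) => [lt|lt|/ord_inj e]; last by rewrite e eqxx in na.
- exists (exist _ (a1, a2) lt); rewrite /pairwise_red /=.
  by rewrite (ltW H1'') real_leNgt ?num_real // H2'.
- exists (exist _ (a2, a1) lt); rewrite /pairwise_red /=.
  by rewrite (ltW H2') real_leNgt ?num_real // H1''.
Qed.

Arguments sep_pair {R X p s1 s2 y a1 a2}.

Theorem mainTheorem15 (R : realType) (X : Type) (p : nat) (Theta : Type)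
    (s : Theta -> X -> 'I_p -> R) (n : nat) (x : 'I_n -> X) :
  (2 <= p)%N ->
  injective x ->
  Natarajan_shattered (fun h => exists th : Theta, h = predictor (s th)) x ->
  (2 ^ n <= growth (fun g => exists th : Theta, g = pairwise_red (s th))
                   (n * p * (p - 1) %/ 2))%N.
Proof.
move=> p2 xinj [f1 [f2 [Hf Hsh]]].
set N := (n * p * (p - 1) %/ 2)%N.
pose D := ('I_n * {ij : 'I_p * 'I_p | (ij.1 < ij.2)%N})%type.
have cardD : #|{: D}| = N.
  rewrite card_prod card_ord card_sig cnt /N -mulnA.
  have ev : (2 %| p * (p - 1))%N.
    rewrite dvdn2 oddM; case: (p) p2 => // q _; rewrite subSS subn0 oddS; by case: (odd q).
  by rewrite muln_divA.
pose T (i : 'I_N) : Zpair X p :=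
  let d := enum_val (cast_ord (esym cardD) i) in (x d.1, d.2).
have Tinj : injective T.
  move=> i j; rewrite /T; set di := enum_val _; set dj := enum_val _.
  case=> /xinj e1 e2.
  have : di = dj by case: di dj e1 e2 => [? ?] [? ?] /= -> ->.
  by move/enum_val_inj/cast_ord_inj.
have Hth : forall b : {ffun 'I_n -> bool}, exists th, forall k,
    predictor (s th) (x k) = Some (if b k then f1 k else f2 k).
  move=> b; have [h [[th ->] Hh]] := Hsh b; by exists th.
have [th Hth'] := choice Hth.
pose F (b : {ffun 'I_n -> bool}) : {ffun 'I_N -> bool} :=
  [ffun i => pairwise_red (s (th b)) (T i)].
have Finj : injective F.
  move=> b1 b2 EF; apply/ffunP => k; apply/eqP/negPn/negP => nb.
  have na : (if b1 k then f1 k else f2 k) != (if b2 k then f1 k else f2 k).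
    move: nb (Hf k); case: (b1 k); case: (b2 k) => //= _; by rewrite eq_sym.
  have [ij Hij] := sep_pair na (Hth' b1 k) (Hth' b2 k).
  pose i := cast_ord cardD (enum_rank ((k, ij) : D)).
  have Ti : T i = (x k, ij) by rewrite /T /i cast_ordK enum_rankK.
  move/ffunP: EF => /(_ i); rewrite /F !ffunE Ti => e.
  by rewrite e eqxx in Hij.
set B := (fun g => exists th : Theta, g = pairwise_red (s th)).
have np : (2 ^ n <= npatterns B T)%N.
  have -> : (2 ^ n = #|{ffun 'I_n -> bool}|)%N by rewrite card_ffun card_bool card_ord.
  rewrite -(card_image Finj predT) /npatterns; apply: subset_leq_card.
  apply/subsetP => f /imageP [b _ ->]; rewrite inE; apply/asboolP.
  exists (pairwise_red (s (th b))); split; first by exists (th b).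
  by move=> i; rewrite ffunE.
have Hlt : (npatterns B T < (2 ^ N).+1)%N.
  rewrite ltnS /npatterns; apply: leq_trans (max_card _) _.
  by rewrite card_ffun card_bool card_ord.
apply: (leq_trans np); rewrite /growth.
apply: (@leq_bigmax_cond _ _ (fun k : 'I_(2 ^ N).+1 => (k : nat)) (Ordinal Hlt)).
by apply/asboolP; exists T.
Qed.
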